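(* Let $q\in\mathrm{prob}(\{0,1\}^2)$. The set $C:=\{(\pi_1,\chi^{(2)}_{1|1}-\chi^{(1)}_{1|1}):(\pi,\chi)\in\Theta_2,\ \mu(\pi,\chi)=q\}$ is nonempty and equals the set of all $(\mathrm{Pr},\Delta\mathrm{Se})\in[0,1]\times[-1,1]$ satisfying $\max\{-q_{10},\ q_{01}-q_{10}+\mathrm{Pr}-1\}\le\mathrm{Pr}\,\Delta\mathrm{Se}\le\min\{q_{01},\ q_{01}-q_{10}+1-\mathrm{Pr}\}$.
   Context: $\mathrm{prob}(\mathcal{X})$ is the set of probability densities on a finite set $\mathcal{X}$; $\mathrm{markov}(\mathcal{X},\mathcal{Y})$ the set of maps $(x,y)\mapsto p_{y|x}$ with $p_{\cdot|x}\in\mathrm{prob}(\mathcal{Y})$. $\Theta_2:=\mathrm{prob}(\{0,1\})\times\mathrm{markov}(\{0,1\},\{0,1\}^2)$, $\mu(\pi,\chi)_j:=\sum_{i=0}^1\pi_i\chi_{j|i}$ for $j\in\{0,1\}^2$, $\chi^{(1)}_{\iota|i}:=\chi_{\iota0|i}+\chi_{\iota1|i}$, $\chi^{(2)}_{\iota|i}:=\chi_{0\iota|i}+\chi_{1\iota|i}$. *)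

(* Defs.v *)
(* Encoding: {0,1} = bool (0 = false, 1 = true),
   {0,1}^2 = bool * bool, where (a,b) stands for the string "ab". *)
From mathcomp Require Import all_boot all_order all_algebra.
Set Implicit Arguments. Unset Strict Implicit. Unset Printing Implicit Defensive.
Import Order.TTheory GRing.Theory Num.Theory.
Local Open Scope ring_scope.

Definition prob (R : numDomainType) (X : finType) (p : X -> R) : Prop :=
  (forall x, 0 <= p x) /\ \sum_(x : X) p x = 1.

(* k x y = p_{y|x}; markov(X,Y) *)
Definition markov (R : numDomainType) (X Y : finType) (k : X -> Y -> R) : Prop :=
  forall x, prob (k x).

Definition Theta2 (R : numDomainType) (pi : bool -> R)
  (chi : bool -> bool * bool -> R) : Prop :=
  prob pi /\ markov chi.

Definition mu (R : numDomainType) (pi : bool -> R) (chi : bool -> bool * bool -> R)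
  (j : bool * bool) : R := \sum_(i : bool) pi i * chi i j.

Definition chi1 (R : numDomainType) (chi : bool -> bool * bool -> R) (iota i : bool) : R :=
  chi i (iota, false) + chi i (iota, true).

Definition chi2 (R : numDomainType) (chi : bool -> bool * bool -> R) (iota i : bool) : R :=
  chi i (false, iota) + chi i (true, iota).

Definition Cset (R : numDomainType) (q : bool * bool -> R) (x : R * R) : Prop :=
  exists (pi : bool -> R) (chi : bool -> bool * bool -> R),
    Theta2 pi chi /\ (forall j, mu pi chi j = q j) /\
    x = (pi true, chi2 chi true true - chi1 chi true true).

(* Main.v *)
Require Import Defs.
From mathcomp Require Import all_boot all_order all_algebra.
From mathcomp Require Import ring lra.
Import Order.TTheory GRing.Theory Num.Theory.
Local Open Scope ring_scope.

Lemma sum4 (R : realFieldType) (F : bool * bool -> R) :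
  \sum_(x : bool * bool) F x =
  F (false,false) + F (false,true) + F (true,false) + F (true,true).
Proof.
rewrite (eq_bigr (fun p => F (p.1,p.2))); last by case.
rewrite -(pair_big xpredT xpredT (fun i j => F (i,j))) /= !big_bool /=.
ring.
Qed.

Lemma sum2 (R : realFieldType) (F : bool -> R) :
  \sum_(x : bool) F x = F false + F true.
Proof. by rewrite big_bool addrC. Qed.

Lemma CsetE (R : realFieldType) (q : bool * bool -> R) Pr DSe :
  Cset q (Pr, DSe) <->
  exists p0 p1 x00 x01 x10 x11 y00 y01 y10 y11 : R,
    [/\ [/\ 0 <= p0, 0 <= p1 & p0 + p1 = 1],
        [/\ 0 <= x00, 0 <= x01, 0 <= x10, 0 <= x11 & x00 + x01 + x10 + x11 = 1],
        [/\ 0 <= y00, 0 <= y01, 0 <= y10, 0 <= y11 & y00 + y01 + y10 + y11 = 1],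
        [/\ q (false,false) = p0 * x00 + p1 * y00,
            q (false,true) = p0 * x01 + p1 * y01,
            q (true,false) = p0 * x10 + p1 * y10 &
            q (true,true) = p0 * x11 + p1 * y11]
      & Pr = p1 /\ DSe = y01 - y10].
Proof.
split.
  move=> [pi [chi [[[pi0 pis] hchi] [hmu [-> ->]]]]].
  have [c0 c0s] := hchi false; have [c1 c1s] := hchi true.
  move: pis c0s c1s; rewrite sum2 !sum4 => pis c0s c1s.
  exists (pi false), (pi true), (chi false (false,false)), (chi false (false,true)),
    (chi false (true,false)), (chi false (true,true)),
    (chi true (false,false)), (chi true (false,true)),
    (chi true (true,false)), (chi true (true,true)).
  split => //.
  - split; rewrite -hmu /mu sum2 //.
  - split => //; rewrite /chi2 /chi1; ring.
move=> [p0 [p1 [x00 [x01 [x10 [x11 [y00 [y01 [y10 [y11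
  [[hp0 hp1 hp] [hx1 hx2 hx3 hx4 hx] [hy1 hy2 hy3 hy4 hy] [q1 q2 q3 q4] [-> ->]]]]]]]]]]]].
pose X := fun j : bool * bool => match j with
  | (false,false) => x00 | (false,true) => x01 | (true,false) => x10 | (true,true) => x11 end.
pose Y := fun j : bool * bool => match j with
  | (false,false) => y00 | (false,true) => y01 | (true,false) => y10 | (true,true) => y11 end.
exists (fun b => if b then p1 else p0), (fun b => if b then Y else X).
rewrite /X /Y; split; [split|split].
- by split; [case | rewrite sum2].
- by case; (split; [move=> [[] []] | rewrite sum4]).
- by move=> [[] []]; rewrite /mu sum2.
- by rewrite /chi2 /chi1 /=; congr pair; ring.
Qed.

Lemma between3 (R : realFieldType) (L1 L2 L3 U1 U2 U3 : R) :
  L1 <= U1 -> L1 <= U2 -> L1 <= U3 ->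
  L2 <= U1 -> L2 <= U2 -> L2 <= U3 ->
  L3 <= U1 -> L3 <= U2 -> L3 <= U3 ->
  exists t, L1 <= t /\ L2 <= t /\ L3 <= t /\ t <= U1 /\ t <= U2 /\ t <= U3.
Proof.
move=> *; exists (Num.max L1 (Num.max L2 L3)).
rewrite !le_max !ge_max !lexx !orbT /=.
by repeat split => //; apply/and3P.
Qed.

Lemma between2 (R : realFieldType) (L1 L2 U1 U2 : R) :
  L1 <= U1 -> L1 <= U2 -> L2 <= U1 -> L2 <= U2 ->
  exists t, [/\ L1 <= t, L2 <= t, t <= U1 & t <= U2].
Proof.
move=> *; exists (Num.max L1 L2).
by rewrite !le_max !ge_max !lexx !orbT /=; split => //; apply/andP.
Qed.

Theorem lemma5 (R : realFieldType) (q : bool * bool -> R) (hq : prob q) :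
  (exists x : R * R, Cset q x) /\
  (forall Pr DSe : R,
     Cset q (Pr, DSe) <->
     [/\ 0 <= Pr <= 1, -1 <= DSe <= 1,
         Num.max (- q (true, false)) (q (false, true) - q (true, false) + Pr - 1)
           <= Pr * DSe
       & Pr * DSe
           <= Num.min (q (false, true)) (q (false, true) - q (true, false) + 1 - Pr)]).
Proof.
case: hq => hq0; rewrite sum4 => hqs.
have qa := hq0 (false,false); have qb := hq0 (false,true).
have qc := hq0 (true,false); have qd := hq0 (true,true).
move: hqs qa qb qc qd.
set a := q (false,false); set b := q (false,true); set c := q (true,false);
set d := q (true,true) => hqs qa qb qc qd.
split.
  exists (0, 0); apply/CsetE.
  exists 1, 0, a, b, c, d, 1, 0, 0, 0.
  split; [split|split|split|split|split]; rewrite ?mul1r ?mul0r ?addr0 //; lra.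
move=> Pr DSe; split.
  move/CsetE=> [p0 [p1 [x00 [x01 [x10 [x11 [y00 [y01 [y10 [y11
  [[hp0 hp1 hp] [hx1 hx2 hx3 hx4 hx] [hy1 hy2 hy3 hy4 hy] [q1 q2 q3 q4] [-> ->]]]]]]]]]]]].
  rewrite /b /c q2 q3 ge_max le_min.
  have -> : p0 = 1 - p1 by lra.
  split; try apply/andP; try split; nra.
move=> [/andP[P0 P1] /andP[D0 D1]].
rewrite ge_max le_min => /andP[h1 h2] /andP[h3 h4].
move: h1 h2 h3 h4; rewrite -/b -/c => h1 h2 h3 h4.
have [Pz|Pnz] := eqVneq Pr 0.
  subst Pr; apply/CsetE.
  have [m1 [m2 [m1p [m2p [m12 m12s]]]]] : exists m1 m2 : R,
      0 <= m1 /\ 0 <= m2 /\ m1 - m2 = DSe /\ m1 + m2 <= 1.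
    case: (lerP 0 DSe) => hD; [exists DSe, 0 | exists 0, (- DSe)]; lra.
  exists 1, 0, a, b, c, d, (1 - m1 - m2), m1, m2, 0.
  split; [split|split|split|split|split]; rewrite ?mul1r ?mul0r ?addr0 //; lra.
have [P1z|P1nz] := eqVneq Pr 1.
  subst Pr; apply/CsetE.
  exists 0, 1, a, b, c, d, a, b, c, d.
  split; [split|split|split|split|split]; rewrite ?mul1r ?mul0r ?add0r //; lra.
have Ppos : 0 < Pr by rewrite lt_def Pnz.
have Plt : Pr < 1 by rewrite lt_def eq_sym P1nz.
have P1ne : 1 - Pr != 0 by rewrite subr_eq0 eq_sym.
set D := Pr * DSe.
have hD : D = Pr * DSe by [].
have DP1 : D <= Pr by rewrite /D; nra.
have DP2 : - Pr <= D by rewrite /D; nra.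
have [t [t1 [t2 [t3 [t4 [t5 t6]]]]]] :=
  @between3 R 0 (- D) ((Pr - 1 + b + c - D) / 2) c (b - D) ((Pr - D) / 2)
   qc ltac:(lra) ltac:(lra) ltac:(lra) ltac:(lra) ltac:(lra)
   ltac:(lra) ltac:(lra) ltac:(lra).
set s := Pr - 2 * t - D.
have hs : s = Pr - 2 * t - D by [].
have [u [u1 u2 u3 u4]] := @between2 R 0 (s - d) a s qa ltac:(lra)
   ltac:(lra) ltac:(lra).
apply/CsetE.
exists (1 - Pr), Pr, ((a - u) / (1 - Pr)), ((b - (D + t)) / (1 - Pr)),
  ((c - t) / (1 - Pr)), ((d - (s - u)) / (1 - Pr)),
  (u / Pr), ((D + t) / Pr), (t / Pr), ((s - u) / Pr).
split; [split|split|split|split|split].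
all: try (apply: divr_ge0; lra).
all: try lra.
all: try (rewrite hs hD; field; by [|rewrite gt_eqF]).
- rewrite -!mulrDl.
  have -> : a - u + (b - (D + t)) + (c - t) + (d - (s - u)) = 1 - Pr by lra.
  by rewrite divff.
all: rewrite -/a -/b -/c -/d ?hs ?hD; field; by [|rewrite gt_eqF].
Qed.
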